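(* For every positive integer $n$ there is a permutation of length $16n\log_2 n+\Theta(n)$ that contains every skew riffle permutation of length $n$ as a pattern.
   Context: A permutation $\pi$ of length $k$ is a pattern of $\sigma$ if there are indices $\ell_1<\cdots<\ell_k$ with $\pi_i<\pi_j$ iff $\sigma_{\ell_i}<\sigma_{\ell_j}$. Riffle shuffle permutations are the permutations avoiding $321$, $2143$ and $2413$; antiriffle permutations are the inverses of riffle shuffle permutations. For permutations $\sigma,\tau$, the operation $\sigma\ominus\tau$ (called skew sum in the paper) is the permutation of length $|\sigma|+|\tau|$ with $(\sigma\ominus\tau)_i=\sigma_i$ for $1\le i\le|\sigma|$ and $(\sigma\ominus\tau)_i=\tau_{i-|\sigma|}+|\sigma|$ for $|\sigma|<i\le|\sigma|+|\tau|$. The skew riffle permutations form the smallest set of permutations containing all riffle and antiriffle permutations and closed under this operation. *)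

(* Defs.v *)
From mathcomp Require Import all_boot.
From Stdlib Require Import Reals.
Set Implicit Arguments. Unset Strict Implicit. Unset Printing Implicit Defensive.

Definition is_perm (s : seq nat) : bool := perm_eq s (iota 1 (size s)).

Definition order_iso (t p : seq nat) : Prop :=
  size t = size p /\
  forall i j, i < size p -> j < size p ->
    (nth 0 p i < nth 0 p j) = (nth 0 t i < nth 0 t j).

Definition contains (s p : seq nat) : Prop :=
  exists t, subseq t s /\ order_iso t p.

Definition avoids (s p : seq nat) : Prop := ~ contains s p.

Definition riffle (s : seq nat) : Prop :=
  is_perm s /\ avoids s [:: 3; 2; 1] /\ avoids s [:: 2; 1; 4; 3]
  /\ avoids s [:: 2; 4; 1; 3].

Definition perm_inv (s : seq nat) : seq nat :=
  [seq (index i s).+1 | i <- iota 1 (size s)].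

Definition antiriffle (s : seq nat) : Prop :=
  exists r, riffle r /\ s = perm_inv r.

(* the operation called "skew sum" in the paper, as defined there *)
Definition ssum (s t : seq nat) : seq nat := s ++ [seq x + size s | x <- t].

Inductive skew_riffle : seq nat -> Prop :=
| SR_riffle s : riffle s -> skew_riffle s
| SR_antiriffle s : antiriffle s -> skew_riffle s
| SR_sum s t : skew_riffle s -> skew_riffle t -> skew_riffle (ssum s t).

Definition log2R (x : R) : R := (ln x / ln 2)%R.

(* Main.v *)
Require Import Defs.
From mathcomp Require Import all_boot.
From Stdlib Require Import Reals.
From mathcomp Require Import zify.
Set Implicit Arguments. Unset Strict Implicit. Unset Printing Implicit Defensive.

Definition good (s : seq nat) : bool := all (fun x => 0 < x <= size s) s.

Definition embeds (sg p : seq nat) : Prop :=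
  exists f : nat -> nat,
    {in p &, forall x y, x < y -> f x < f y} /\ subseq (map f p) sg.

Lemma embeds_contains sg p : embeds sg p -> contains sg p.
Proof.
case=> f [mf sub]; exists (map f p); split=> //; split; first by rewrite size_map.
move=> i j ip jp; rewrite !(nth_map 0) //.
have xi := mem_nth 0 ip; have xj := mem_nth 0 jp.
case: (ltngtP (nth 0 p i) (nth 0 p j)) => h.
- by rewrite (mf _ _ xi xj h).
- by have h2 := mf _ _ xj xi h; rewrite (leq_gtF (ltnW h2)).
- by rewrite h ltnn.
Qed.

Lemma perm_good (s : seq nat) : is_perm s -> good s.
Proof.
move=> ps; apply/allP=> x xs; by rewrite -(mem_iota 1 (size s)) -(perm_mem ps) xs.
Qed.

Lemma good_perm (s : seq nat) : uniq s -> good s -> is_perm s.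
Proof.
move=> us gs; rewrite /is_perm; apply: uniq_perm => //; first exact: iota_uniq.
have sub : {subset s <= iota 1 (size s)}.
  by move=> x xs; rewrite mem_iota; move/allP: gs => /(_ x xs); lia.
apply: (uniq_min_size us sub _).2; by rewrite size_iota.
Qed.

Lemma perm_uniq' (s : seq nat) : is_perm s -> uniq s.
Proof. by move=> ps; rewrite (perm_uniq ps) iota_uniq. Qed.

Lemma ssum_perm (s t : seq nat) : is_perm s -> is_perm t -> is_perm (ssum s t).
Proof.
rewrite /is_perm /ssum => ps pt; rewrite size_cat size_map iotaD.
apply: perm_cat => //.
rewrite addnC iotaDl.
have -> : [seq x + size s | x <- t] = [seq size s + x | x <- t].
  by apply: eq_map => x; rewrite addnC.
exact: perm_map.
Qed.

Lemma ssum_good (s t : seq nat) : good s -> good t -> good (ssum s t).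
Proof.
move=> /allP gs /allP gt; apply/allP => x; rewrite /ssum mem_cat size_cat size_map.
case/orP=> [/gs|/mapP [y /gt yt ->]]; lia.
Qed.

Lemma embeds_nil sg : embeds sg [::].
Proof. exists (fun x : nat => x); split; [by move=> x y; rewrite in_nil | exact: sub0seq]. Qed.

Lemma embeds_prefix (s t p : seq nat) : embeds s p -> embeds (ssum s t) p.
Proof.
case=> f [mf sub]; exists f; split=> //.
exact: subseq_trans sub (prefix_subseq _ _).
Qed.

Lemma embeds_suffix (s t p : seq nat) : embeds t p -> embeds (ssum s t) p.
Proof.
case=> f [mf sub]; exists (fun x => f x + size s); split.
  by move=> x y xp yp h; rewrite ltn_add2r; apply: mf.
apply: subseq_trans (suffix_subseq s _).
have -> : [seq f x + size s | x <- p] = [seq x + size s | x <- map f p] by rewrite -map_comp.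
exact: map_subseq.
Qed.

Lemma embeds_ssum (s1 s2 p1 p2 : seq nat) : good s1 -> good s2 -> good p1 -> good p2 ->
  embeds s1 p1 -> embeds s2 p2 -> embeds (ssum s1 s2) (ssum p1 p2).
Proof.
move=> /allP g1 /allP g2 /allP h1 /allP h2 [f1 [m1 sub1]] [f2 [m2 sub2]].
pose f x := if x <= size p1 then f1 x else f2 (x - size p1) + size s1.
have f1s x : x \in p1 -> f1 x \in s1.
  by move=> xp; apply: (mem_subseq sub1); apply: map_f.
have f2s x : x \in p2 -> f2 x \in s2.
  by move=> xp; apply: (mem_subseq sub2); apply: map_f.
exists f; split.
  move=> x y; rewrite /ssum !mem_cat.
  case/orP=> [xp|/mapP[x' xp ->]]; case/orP=> [yp|/mapP[y' yp ->]] lt; rewrite /f.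
  - have := h1 _ xp; have := h1 _ yp; move=> a b.
    rewrite ifT; last by lia. rewrite ifT; last by lia. exact: m1.
  - have := h1 _ xp; have := h2 _ yp; have := g1 _ (f1s _ xp); have := g2 _ (f2s _ yp).
    move=> a b c d; rewrite ifT; last by lia. rewrite ifF; last by lia. rewrite addnK. lia.
  - have := h1 _ yp; have := h2 _ xp; lia.
  - have := h2 _ xp; have := h2 _ yp => a b.
    rewrite ifF; last by lia. rewrite ifF; last by lia.
    rewrite ltn_add2r !addnK; apply: m2 => //; lia.
rewrite /ssum map_cat; apply: cat_subseq.
  have -> : map f p1 = map f1 p1.
    by apply/eq_in_map => x xp; rewrite /f; have := h1 _ xp => a; rewrite ifT //; lia.
  done.
have -> : [seq f i | i <- [seq x + size p1 | x <- p2]] = [seq x + size s1 | x <- map f2 p2].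
  rewrite -!map_comp; apply/eq_in_map => x xp /=; rewrite /f.
  have := h2 _ xp => a; rewrite ifF; last by lia. by rewrite addnK.
exact: map_subseq.
Qed.
Lemma ssum_nil_l (t : seq nat) : ssum [::] t = t.
Proof. rewrite /ssum /=; under eq_map do rewrite addn0; exact: map_id. Qed.

Lemma ssumA (a b c : seq nat) : ssum (ssum a b) c = ssum a (ssum b c).
Proof.
rewrite /ssum size_cat size_map map_cat -catA -map_comp; do 2 congr (_ ++ _).
by apply/eq_map => x /=; lia.
Qed.

Definition ssum_list (bs : seq (seq nat)) := foldr ssum [::] bs.

Lemma ssum_list_cat bs1 bs2 :
  ssum_list (bs1 ++ bs2) = ssum (ssum_list bs1) (ssum_list bs2).
Proof.
elim: bs1 => [|b bs IH] /=; first by rewrite ssum_nil_l.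
by rewrite IH ssumA.
Qed.

Lemma size_ssum (a b : seq nat) : size (ssum a b) = size a + size b.
Proof. by rewrite /ssum size_cat size_map. Qed.

Definition total (bs : seq (seq nat)) := sumn (map size bs).

Lemma size_ssum_list bs : size (ssum_list bs) = total bs.
Proof. by elim: bs => [|b bs IH] //=; rewrite size_ssum IH. Qed.

Lemma total_cat bs1 bs2 : total (bs1 ++ bs2) = total bs1 + total bs2.
Proof. by rewrite /total map_cat sumn_cat. Qed.

Definition Dperm (p : seq nat) : Prop := riffle p \/ antiriffle p.

Lemma flatten_sr p : skew_riffle p ->
  exists bs, (forall b, b \in bs -> Dperm b) /\ p = ssum_list bs.
Proof.
elim=> [s rs|s as_|s t _ [bs1 [H1 ->]] _ [bs2 [H2 ->]]].
- exists [:: s]; split; last by rewrite /= /ssum /= cats0.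
  by move=> b; rewrite inE => /eqP ->; left.
- exists [:: s]; split; last by rewrite /= /ssum /= cats0.
  by move=> b; rewrite inE => /eqP ->; right.
- exists (bs1 ++ bs2); split; last by rewrite ssum_list_cat.
  by move=> b; rewrite mem_cat => /orP[/H1|/H2].
Qed.

Lemma split_blocks (bs : seq (seq nat)) N : total bs <= N \/
  exists bs1 b bs2, bs = bs1 ++ b :: bs2 /\ total bs1 <= N < total bs1 + size b.
Proof.
elim: bs N => [|x bs IH] N; first by left.
case: (ltnP N (size x)) => h.
  by right; exists [::], x, bs; split=> //=; rewrite /total /=; lia.
case: (IH (N - size x)) => [h2|[bs1 [b [bs2 [-> h2]]]]].
  by left; rewrite /total /=; rewrite /total in h2; lia.
right; exists (x :: bs1), b, bs2; split=> //.
rewrite /total /= -/(total bs1); lia.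
Qed.
Fixpoint wr (a b m : nat) : seq nat :=
  if m is m'.+1 then a :: b :: wr a.+1 b.+1 m' else [::].
Definition Wr M := wr M.+1 1 M.
Definition Wa M := map (fun j => j.*2.+1) (iota 0 M) ++ map (fun j => j.*2.+2) (iota 0 M).
Definition W M := ssum (Wr M) (Wa M).

Lemma size_wr a b m : size (wr a b m) = m.*2.
Proof. by elim: m a b => [|m IH] a b //=; rewrite IH doubleS. Qed.

Lemma mem_wr a b m x : (x \in wr a b m) = (a <= x < a + m) || (b <= x < b + m).
Proof.
elim: m a b => [|m IH] a b /=; first by rewrite !addn0; apply/esym/negbTE; lia.
rewrite !inE IH; apply/idP/idP => h; lia.
Qed.

Lemma uniq_wr a b m : b + m <= a -> uniq (wr a b m).
Proof.
elim: m a b => [|m IH] a b h //=.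
rewrite !inE !mem_wr IH; last by lia.
rewrite andbT; apply/andP; split.
  apply/negP => /orP[/eqP|]; lia.
apply/negP; lia.
Qed.

Lemma size_W M : size (W M) = 4 * M.
Proof. rewrite size_ssum /Wr /Wa size_wr size_cat !size_map size_iota; lia. Qed.

Lemma Wr_perm M : is_perm (Wr M).
Proof.
apply: good_perm; first by apply: uniq_wr; lia.
apply/allP => x; rewrite /Wr mem_wr size_wr; lia.
Qed.

Lemma Wa_perm M : is_perm (Wa M).
Proof.
apply: good_perm.
  rewrite /Wa cat_uniq !map_inj_uniq ?iota_uniq //; try by move=> i j /= h; lia.
  rewrite andbT /=; apply/hasPn => x /mapP [j _ ->]; apply/negP => /mapP [i _]; lia.
apply/allP => x; rewrite /Wa size_cat !size_map size_iota mem_cat.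
case/orP => /mapP [j]; rewrite mem_iota => h ->; lia.
Qed.

Lemma W_perm M : is_perm (W M).
Proof. apply: ssum_perm; [exact: Wr_perm | exact: Wa_perm]. Qed.
Lemma sub_nth (s : seq nat) (ix : seq nat) d : sorted ltn ix ->
  all (fun i => d <= i < d + size s) ix ->
  subseq (map (fun i => nth 0 s (i - d)) ix) s.
Proof.
elim: s ix d => [|x s IH] ix d.
  by case: ix => [|i ix] //= _; rewrite addn0; case/andP; lia.
case: ix => [|i ix] // srt /andP [hi hall].
have pix : path ltn i ix by [].
rewrite (path_sortedE ltn_trans) in pix; case/andP: pix => /allP gti srtix.
have hall' : all (fun j => d.+1 <= j < d.+1 + size s) ix.
  apply/allP => j jix; have := gti _ jix; move/allP: hall => /(_ _ jix) /=; move: hi => /=; lia.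
case: (eqVneq i d) => [eid|nid].
  rewrite eid /= subnn /= eqxx.
  have -> : [seq nth 0 (x :: s) (i0 - d) | i0 <- ix] = [seq nth 0 s (i0 - d.+1) | i0 <- ix].
    apply/eq_in_map => j jix; have := gti _ jix; rewrite eid => h.
    by rewrite (_ : j - d = (j - d.+1).+1) //; lia.
  exact: IH.
apply: (subseq_trans _ (subseq_cons s x)).
have -> : [seq nth 0 (x :: s) (i0 - d) | i0 <- i :: ix] = [seq nth 0 s (i0 - d.+1) | i0 <- i :: ix].
  apply/eq_in_map => j; rewrite inE => /orP [/eqP ->|jix].
    by rewrite (_ : i - d = (i - d.+1).+1) //; lia.
  have := gti _ jix => h. by rewrite (_ : j - d = (j - d.+1).+1) //; lia.
apply: IH; first exact: srt.
rewrite /= hall' andbT; move: hi nid => /=; lia.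
Qed.

Section Pos.
Variable r : seq nat.
Hypothesis ur : uniq r.
Local Notation pos x := (index x r).

Lemma pos_inj x y : x \in r -> y \in r -> pos x = pos y -> x = y.
Proof. by move=> xr yr h; rewrite -(nth_index 0 xr) -(nth_index 0 yr) h. Qed.

Lemma contains_of (xs p : seq nat) : all (fun x => x \in r) xs ->
  sorted ltn (map (fun x => pos x) xs) -> order_iso xs p -> contains r p.
Proof.
move=> /allP xr srt oi; exists xs; split=> //.
have -> : xs = map (fun i => nth 0 r (i - 0)) (map (fun x => pos x) xs).
  rewrite -map_comp -[LHS]map_id; apply/eq_in_map => x xx /=.
  by rewrite subn0 nth_index // xr.
apply: sub_nth => //; apply/allP => i /mapP [x xx ->]; rewrite index_mem xr //.
Qed.
End Pos.
Ltac boolsolve := apply/idP/idP => H; lia.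

Lemma oi321 (x y z : nat) : z < y < x -> order_iso [:: x; y; z] [:: 3; 2; 1].
Proof.
move=> *; split=> // i j.
by case: i => [|[|[|i]]]; case: j => [|[|[|j]]] //= _ _; try (apply/idP/idP => H; lia).
Qed.

Lemma oi2143 (a b c d : nat) : b < a -> a < d -> d < c -> order_iso [:: a; b; c; d] [:: 2; 1; 4; 3].
Proof.
move=> *; split=> // i j.
by case: i => [|[|[|[|i]]]]; case: j => [|[|[|[|j]]]] //= _ _; try (apply/idP/idP => H; lia). 
Qed.

Lemma oi2413 (a b c d : nat) : c < a -> a < d -> d < b -> order_iso [:: a; b; c; d] [:: 2; 4; 1; 3].
Proof.
move=> *; split=> // i j.
by case: i => [|[|[|[|i]]]]; case: j => [|[|[|[|j]]]] //= _ _; try (apply/idP/idP => H; lia).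
Qed.

Lemma pos_cmp (r : seq nat) x y : uniq r -> x \in r -> y \in r -> x <> y ->
  index x r < index y r \/ index y r < index x r.
Proof.
move=> ur xr yr ne; case: (ltngtP (index x r) (index y r)) => h; try by [left|right].
by exfalso; apply: ne; exact: (pos_inj xr yr h).
Qed.

Lemma inv_sep (r : seq nat) : riffle r -> forall a1 b1 a2 b2,
  a1 \in r -> b1 \in r -> a2 \in r -> b2 \in r ->
  b1 < a1 -> index a1 r < index b1 r -> b2 < a2 -> index a2 r < index b2 r -> b1 < a2.
Proof.
case=> pr [n321 [n2143 n2413]] a1 b1 a2 b2 ra1 rb1 ra2 rb2 i1 p1 i2 p2.
have ur := perm_uniq' pr.
rewrite ltnNge; apply/negP => hle.
have [eq|lt] : a2 = b1 \/ a2 < b1 by lia.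
  apply: n321; apply: (@contains_of r [:: a1; b1; b2]).
  + by rewrite /= ra1 rb1 rb2.
  + by rewrite eq in p2; rewrite /=; lia.
  + apply: oi321; lia.
have neq1 : a1 <> a2 by move=> e; rewrite e in i1 i2 hle lt; lia.
have [q1|q1] := pos_cmp ur ra1 ra2 neq1.
  apply: n321; apply: (@contains_of r [:: a1; a2; b2]).
  + by rewrite /= ra1 ra2 rb2.
  + by rewrite /=; lia.
  + apply: oi321; lia.
have neq2 : b2 <> a1 by move=> e; rewrite e in i1 i2 hle lt; lia.
have [q2|q2] := pos_cmp ur rb2 ra1 neq2.
  apply: n2143; apply: (@contains_of r [:: a2; b2; a1; b1]).
  + by rewrite /= ra1 ra2 rb2 rb1.
  + by rewrite /=; lia.
  + apply: oi2143; lia.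
have neq3 : b2 <> b1 by move=> e; rewrite e in i1 i2 hle lt; lia.
have [q3|q3] := pos_cmp ur rb2 rb1 neq3.
  apply: n2413; apply: (@contains_of r [:: a2; a1; b2; b1]).
  + by rewrite /= ra1 ra2 rb2 rb1.
  + by rewrite /=; lia.
  + apply: oi2413; lia.
apply: n321; apply: (@contains_of r [:: a1; b1; b2]).
+ by rewrite /= ra1 rb1 rb2.
+ by rewrite /=; lia.
+ apply: oi321; lia.
Qed.
Lemma riffle_struct (r : seq nat) : riffle r -> exists k, k <= size r /\
  forall x y, x \in r -> y \in r -> x < y -> (y <= k) || (k < x) ->
    index x r < index y r.
Proof.
move=> rr; have pr := rr.1; have ur := perm_uniq' pr; have /allP gr := perm_good pr.
pose P := fun b => has (fun a => (b < a) && (index a r < index b r)) r.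
exists (\max_(b <- r | P b) b); split.
  by apply/bigmax_leqP_seq => i ir _; have := gr _ ir; lia.
move=> x y xr yr lt hk.
have ne : x <> y by move=> e; rewrite e ltnn in lt.
have [//|q] := pos_cmp ur xr yr ne.
have Px : P x by apply/hasP; exists y => //; rewrite lt q.
have h1 : x <= \max_(b <- r | P b) b := @leq_bigmax_seq _ r P (fun b => b) x xr Px.
have h2 : \max_(b <- r | P b) b <= y.-1.
  apply/bigmax_leqP_seq => b br /hasP [a ar /andP [ba qa]].
  have := inv_sep rr ar br yr xr ba qa lt q; lia.
move: hk h1 h2; lia.
Qed.

Lemma wr_sub (c : nat -> bool) n m a b s : n <= m ->
  subseq [seq if c j then b + j else a + j | j <- iota s n] (wr (a + s) (b + s) m).
Proof.
elim: n m s => [|n IH] [|m] s h; try exact: sub0seq; first by [].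
have IH' := IH m s.+1 h; rewrite !addnS in IH'.
change (subseq ((if c s then b + s else a + s) :: [seq (if c j then b + j else a + j) | j <- iota s.+1 n])
   ((a + s) :: (b + s) :: wr (a + s).+1 (b + s).+1 m)).
case: (c s).
  apply: (subseq_trans _ (subseq_cons _ (a + s))).
  by rewrite /= eqxx.
rewrite /= eqxx; exact: (subseq_trans IH' (subseq_cons _ _)).
Qed.
Lemma riffle_Wr (r : seq nat) M : riffle r -> size r <= M -> embeds (Wr M) r.
Proof.
move=> rr hM; have pr := rr.1; have ur := perm_uniq' pr; have /allP gr := perm_good pr.
have [k [kn st]] := riffle_struct rr.
pose f x := if x <= k then 1 + index x r else M.+1 + index x r.
exists f; split.
  move=> x y xr yr lt; rewrite /f.
  have ix : index x r < size r by rewrite index_mem.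
  have iy : index y r < size r by rewrite index_mem.
  case: (leqP x k) => hx; case: (leqP y k) => hy.
  - have := st x y xr yr lt; rewrite hy /= => /(_ isT); lia.
  - lia.
  - lia.
  - have := st x y xr yr lt; rewrite hx orbT => /(_ isT); lia.
have -> : map f r = [seq if nth 0 r j <= k then 1 + j else M.+1 + j | j <- iota 0 (size r)].
  rewrite -{1}(mkseq_nth 0 r) /mkseq -map_comp; apply/eq_in_map => j; rewrite mem_iota => hj /=.
  by rewrite /f index_uniq //; lia.
have := wr_sub (fun j => nth 0 r j <= k) M.+1 1 0 hM.
by rewrite !addn0.
Qed.

Lemma sorted_map_iota (g : nat -> nat) a m :
  (forall i, a <= i -> i.+1 < a + m -> g i < g i.+1) -> sorted ltn (map g (iota a m)).
Proof.
elim: m a => [|m IH] a h //=.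
case: m IH h => [|m] IH h //=.
apply/andP; split; first by apply: h; lia.
have := IH a.+1 (fun i h1 h2 => h i (ltnW h1) (leq_trans h2 _)); rewrite /=; apply; lia.
Qed.

Lemma sub_iota (l : seq nat) M : sorted ltn l -> all (fun x => x < M) l -> subseq l (iota 0 M).
Proof.
move=> sl /allP al.
have -> : l = filter (fun x => x \in l) (iota 0 M).
  apply: (irr_sorted_eq ltn_trans ltnn) => //.
    by apply: sorted_filter; [exact: ltn_trans | exact: iota_ltn_sorted].
  move=> x; rewrite mem_filter mem_iota; case xl: (x \in l) => //=; have := al _ xl; lia.
exact: filter_subseq.
Qed.

Lemma perm_inv_perm (r : seq nat) : is_perm r -> is_perm (perm_inv r).
Proof.
move=> pr; have ur := perm_uniq' pr.
have mr i : (i \in r) = (1 <= i < 1 + size r) by rewrite (perm_mem pr) mem_iota.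
apply: good_perm.
  rewrite /perm_inv map_inj_in_uniq ?iota_uniq // => i j; rewrite !mem_iota => hi hj [] e.
  by apply: (pos_inj (r := r)) => //; rewrite mr.
apply/allP => v; rewrite /perm_inv size_map size_iota => /mapP [i]; rewrite mem_iota => hi ->.
have : index i r < size r by rewrite index_mem mr.
lia.
Qed.

Lemma antiriffle_Wa (s : seq nat) M : antiriffle s -> size s <= M -> embeds (Wa M) s.
Proof.
case=> r [rr ->] hM; have pr := rr.1; have ur := perm_uniq' pr.
have mr i : (i \in r) = (1 <= i < 1 + size r) by rewrite (perm_mem pr) mem_iota.
have sz : size (perm_inv r) = size r by rewrite /perm_inv size_map size_iota.
rewrite sz in hM.
have [k [kn st]] := riffle_struct rr.
pose f v := if nth 0 r v.-1 <= k then (v.-1).*2.+1 else (v.-1).*2.+2.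
exists f; split.
  have /allP g := perm_good (perm_inv_perm pr); rewrite sz in g.
  move=> x y xr yr lt; have := g _ xr; have := g _ yr; rewrite /f.
  case: (_ <= k); case: (_ <= k); lia.
pose g i := if i <= k then (index i r).*2.+1 else (index i r).*2.+2.
have -> : map f (perm_inv r) = map g (iota 1 (size r)).
  rewrite /perm_inv -map_comp; apply/eq_in_map => i hi /=.
  by rewrite /f /g /= nth_index // mr -mem_iota.
have -> : size r = k + (size r - k) by lia.
rewrite iotaD map_cat /Wa; apply: cat_subseq.
  have -> : map g (iota 1 k) = map (fun j => j.*2.+1) (map (fun i => index i r) (iota 1 k)).
    rewrite -map_comp; apply/eq_in_map => i; rewrite mem_iota /g /= => hi.
    by rewrite ifT //; lia.
  apply: map_subseq; apply: sub_iota.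
    apply: sorted_map_iota => i h1 h2; apply: st; [rewrite mr; lia | rewrite mr; lia | lia | apply/orP; left; lia].
  apply/allP => j /mapP [i]; rewrite mem_iota => hi ->.
  have : index i r < size r by rewrite index_mem mr; lia.
  lia.
have -> : map g (iota (1 + k) (size r - k)) =
    map (fun j => j.*2.+2) (map (fun i => index i r) (iota (1 + k) (size r - k))).
  rewrite -map_comp; apply/eq_in_map => i; rewrite mem_iota /g /= => hi.
  by rewrite ifF //; lia.
apply: map_subseq; apply: sub_iota.
  apply: sorted_map_iota => i h1 h2; apply: st; [rewrite mr; lia | rewrite mr; lia | lia | apply/orP; right; lia].
apply/allP => j /mapP [i]; rewrite mem_iota => hi ->.
have : index i r < size r by rewrite index_mem mr; lia.
lia.
Qed.

Lemma Dperm_perm p : Dperm p -> is_perm p.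
Proof. by case=> [[]//|[r [[pr _] ->]]]; apply: perm_inv_perm. Qed.

Lemma Dperm_W p M : Dperm p -> size p <= M -> embeds (W M) p.
Proof.
case=> h hM; [apply: embeds_prefix; exact: riffle_Wr | apply: embeds_suffix; exact: antiriffle_Wa].
Qed.
Fixpoint U k : seq nat :=
  if k is k'.+1 then ssum (U k') (ssum (W (expn 2 k)) (U k')) else [::].

Lemma U_perm k : is_perm (U k).
Proof.
elim: k => [|k IH]; first by [].
rewrite [U _]/U -/U. by apply: ssum_perm => //; apply: ssum_perm => //; exact: W_perm.
Qed.

Lemma size_U k : size (U k) = 4 * k * expn 2 k.
Proof.
elim: k => [|k IH]; first by [].
rewrite [U _]/U -/U !size_ssum /Wr /Wa size_wr size_cat !size_map size_iota IH expnS; nia.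
Qed.

Lemma good_list bs : (forall b, b \in bs -> Dperm b) -> good (ssum_list bs).
Proof.
elim: bs => [|b bs IH] h //=; apply: ssum_good.
  by apply: perm_good; apply: Dperm_perm; apply: h; rewrite inE eqxx.
by apply: IH => c cb; apply: h; rewrite inE cb orbT.
Qed.

Lemma U_univ k bs : (forall b, b \in bs -> Dperm b) -> total bs < expn 2 k ->
  embeds (U k) (ssum_list bs).
Proof.
elim: k bs => [|k IH] bs hb ht.
  have : size (ssum_list bs) = 0 by rewrite size_ssum_list; move: ht; rewrite expn0; lia.
  by move/size0nil => ->; exact: embeds_nil.
have N0 : 0 < expn 2 k by rewrite expn_gt0.
rewrite [U _]/U -/U.
case: (split_blocks bs (expn 2 k).-1) => [h|[bs1 [b [bs2 [E /andP [h1 h2]]]]]].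
  by apply: embeds_prefix; apply: IH => //; lia.
have hb1 c : c \in bs1 -> Dperm c by move=> cb; apply: hb; rewrite E mem_cat cb.
have hb2 c : c \in bs2 -> Dperm c by move=> cb; apply: hb; rewrite E mem_cat inE cb !orbT.
have hbb : Dperm b by apply: hb; rewrite E mem_cat inE eqxx orbT.
have ht' : total bs1 + size b + total bs2 < 2 * expn 2 k.
  by move: ht; rewrite E total_cat expnS /total /=; lia.
rewrite E ssum_list_cat /=.
have gU := perm_good (U_perm k).
have gb := perm_good (Dperm_perm hbb).
apply: embeds_ssum => //.
- by apply: perm_good; apply: ssum_perm; [exact: W_perm | exact: U_perm].
- exact: good_list.
- by apply: ssum_good => //; exact: good_list.
- by apply: IH => //; lia.
apply: embeds_ssum => //.
- exact: perm_good (W_perm _).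
- exact: good_list.
- by apply: Dperm_W => //; rewrite expnS; lia.
- by apply: IH => //; lia.
Qed.
From Stdlib Require Import Lra Psatz ZArith.

Lemma INR_expn2 j : INR (expn 2 j) = (2 ^ j)%R.
Proof.
elim: j => [|j IH]; first by rewrite expn0.
by rewrite expnS mulnE mult_INR IH /=.
Qed.

Theorem theorem13 :
  exists c1 c2 : R, (0 < c1)%R /\ (0 < c2)%R /\
    forall n : nat, 0 < n ->
      exists sigma : seq nat,
        is_perm sigma /\
        (c1 * INR n <= INR (size sigma) - 16 * INR n * log2R (INR n)
           <= c2 * INR n)%R /\
        forall p : seq nat, size p = n -> skew_riffle p -> contains sigma p.
Proof.
exists 1%R, 8%R; split; [lra|split; [lra|]].
move=> n n0.
set j := trunc_log 2 n.
have hj1 : expn 2 j <= n := trunc_logP (isT : 1 < 2) n0.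
have hj2 : n < expn 2 j.+1 := trunc_log_ltn n (isT : 1 < 2).
set u := size (U j.+1).
have hu : u <= 8 * j.+1 * n by rewrite /u size_U expnS; nia.
set l := log2R (INR n).
have Hn : (1 <= INR n)%R by apply: (le_INR 1); apply/leP.
have ln2 : (0 < ln 2)%R by have := ln_lt_2; lra.
have Hj : (INR j <= l)%R.
  have e1 : (2 ^ j <= INR n)%R by rewrite -INR_expn2; apply: le_INR; apply/leP.
  have e2 : (ln (2 ^ j) <= ln (INR n))%R.
    case: (Rle_lt_or_eq_dec _ _ e1) => h; last by rewrite h; lra.
    apply: Rlt_le; apply: ln_increasing => //; apply: pow_lt; lra.
  rewrite ln_pow in e2; last by lra.
  rewrite /l /log2R; apply: (Rmult_le_reg_r (ln 2)) => //.
  have -> : (ln (INR n) / ln 2 * ln 2 = ln (INR n))%R by field; lra.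
  exact: e2.
have Hl0 : (0 <= l)%R by have := pos_INR j; lra.
set x := (16 * INR n * l + INR n)%R.
have x0 : (0 < x)%R.
  have : (0 <= INR n * l)%R by apply: Rmult_le_pos; lra.
  rewrite /x; lra.
set L := Z.to_nat (up x).
have [ax1 ax2] := archimed x.
have hL : INR L = IZR (up x).
  rewrite /L INR_IZR_INZ Z2Nat.id //.
  apply: Z.lt_le_incl; apply: lt_IZR; lra.
have hu' : (INR u <= 8 * (INR j + 1) * INR n)%R.
  have e8 : INR 8 = 8%R by simpl; lra.
  by have := le_INR _ _ (elimT leP hu); rewrite !mulnE !mult_INR e8 (S_INR j).
have nl : (INR j * INR n <= l * INR n)%R by apply: Rmult_le_compat_r; lra.
exists (ssum (U j.+1) (iota 1 (L - u))).
split; first by apply: ssum_perm; [exact: U_perm | by rewrite /is_perm size_iota].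
split.
  rewrite size_ssum size_iota -/u.
  case: (leqP u L) => h.
    rewrite subnKC // hL; rewrite /x in ax1 ax2 *; split; lra.
  have -> : u + (L - u) = u by lia.
  have : (INR L < INR u)%R by apply: lt_INR; apply/ltP.
  rewrite hL => h'; rewrite /x in ax1 ax2 h' *; split; nra.
move=> p sp srp.
have [bs [hb E]] := flatten_sr srp.
apply: embeds_contains; apply: embeds_prefix; rewrite E; apply: U_univ => //.
by rewrite -size_ssum_list -E sp.
Qed.
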